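(* For all $n\geq 0$, $$d_n=\sum_{k=0}^{n}(-1)^{(n-k)/2}d_{n,k}\,s_k,$$ where $d_{n,k}=\frac{k+1}{n+1}\binom{n+1}{\frac{n-k}{2}}$ if $n-k$ is even and $d_{n,k}=0$ if $n-k$ is odd (terms with $d_{n,k}=0$ are omitted). Moreover, for each $k\geq 0$, $\sum_{n\geq 0}d_{n,k}x^n=x^kC(x^2)^{k+1}$, where $C(x)=\frac{1-\sqrt{1-4x}}{2x}$.
   Context: Steps: $U=(1,1)$, $D=(1,-1)$, $H=(2,0)$. A Dyck path of length $2n$ is a lattice path from $(0,0)$ to $(2n,0)$ with steps $U,D$ never going below the $x$-axis; a Schröder path of length $2n$ is a lattice path from $(0,0)$ to $(2n,0)$ with steps $U,D,H$ never going below the $x$-axis. Such a path is symmetric if it has a vertex with $x$-coordinate $n$ and is invariant under reflection in the line $x=n$ (reversing the step sequence and interchanging $U$ and $D$ gives the same sequence). $d_n$ = number of symmetric Dyck paths of length $2n$, $s_n$ = number of symmetric Schröder paths of length $2n$. *)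

(* Defs.v *)
From Stdlib Require Import Reals Arith List Bool.
From Coquelicot Require Import Coquelicot.
Import ListNotations.
Open Scope R_scope.

(* Steps: U = (1,1), D = (1,-1), H = (2,0). *)
Inductive step : Type := U | D | H.

Definition step_eqb (a b : step) : bool :=
  match a, b with U, U | D, D | H, H => true | _, _ => false end.

Definition width (s : step) : nat := match s with U | D => 1 | H => 2 end.

Fixpoint words (m : nat) : list (list step) :=
  match m with
  | O => [ [] ]
  | S m' => map (cons U) (words m') ++ map (cons D) (words m') ++
            match m' with O => [] | S m'' => map (cons H) (words m'') end
  end.

Fixpoint nonneg_ends0 (h : nat) (p : list step) : bool :=
  match p with
  | [] => Nat.eqb h 0
  | U :: q => nonneg_ends0 (S h) q
  | D :: q => match h with O => false | S h' => nonneg_ends0 h' q end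
  | H :: q => nonneg_ends0 h q
  end.

Fixpoint has_vertex_at (n x : nat) (p : list step) : bool :=
  Nat.eqb x n || match p with
                 | [] => false
                 | s :: q => has_vertex_at n (x + width s) q
                 end.

(* reflection in a vertical line: reverse and interchange U and D *)
Definition flip (s : step) : step := match s with U => D | D => U | H => H end.
Definition reflect (p : list step) : list step := rev (map flip p).

Fixpoint list_step_eqb (p q : list step) : bool :=
  match p, q with
  | [], [] => true
  | a :: p', b :: q' => step_eqb a b && list_step_eqb p' q'
  | _, _ => false
  end.

(* symmetric (w.r.t. x = n) path of length 2n; p has width 2n by construction *)
Definition symmetricb (n : nat) (p : list step) : bool :=
  has_vertex_at n 0 p && list_step_eqb (reflect p) p.

Definition schroederb (p : list step) : bool := nonneg_ends0 0 p.
Definition dyckb (p : list step) : bool :=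
  nonneg_ends0 0 p && forallb (fun s => negb (step_eqb s H)) p.

Definition dsym (n : nat) : nat :=
  length (filter (fun p => dyckb p && symmetricb n p) (words (2 * n))).

Definition ssym (n : nat) : nat :=
  length (filter (fun p => schroederb p && symmetricb n p) (words (2 * n))).

Definition dnk (n k : nat) : R :=
  if (k <=? n)%nat && Nat.even (n - k)
  then (INR (k + 1) / INR (n + 1)) * Binomial.C (n + 1) ((n - k) / 2)
  else 0.

(* C(x) = (1 - sqrt(1-4x)) / (2x), extended by its limit C(0) = 1 *)
Definition Ccat (x : R) : R :=
  if Req_EM_T x 0 then 1 else (1 - sqrt (1 - 4 * x)) / (2 * x).

(* Main.v *)
Require Import Defs.
From Stdlib Require Import Reals Arith List Bool Lia Lra.
From Coquelicot Require Import Coquelicot.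
Import ListNotations.
Open Scope R_scope.

Definition lsum (f : list step -> nat) (l : list (list step)) : nat :=
  fold_right (fun u acc => (f u + acc)%nat) 0%nat l.

Lemma lsum_app f l1 l2 : lsum f (l1 ++ l2) = (lsum f l1 + lsum f l2)%nat.
Proof. induction l1; simpl; lia. Qed.

Lemma lsum_map f g l : lsum f (map g l) = lsum (fun u => f (g u)) l.
Proof. induction l; simpl; auto. Qed.

Lemma lsum_ext_in f g l : (forall u, In u l -> f u = g u) -> lsum f l = lsum g l.
Proof. induction l; simpl; intros Hf; [reflexivity|]. rewrite Hf by auto. rewrite IHl by auto. reflexivity. Qed.

Definition wlen (u : list step) : nat := fold_right (fun s acc => (width s + acc)%nat) 0%nat u.

Lemma words_wlen : forall m u, In u (words m) -> wlen u = m.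
Proof.
  induction m as [m IH] using lt_wf_ind; intros u Hu.
  destruct m as [|m]; simpl in Hu.
  - destruct Hu as [<-|[]]; reflexivity.
  - apply in_app_iff in Hu; destruct Hu as [Hu|Hu].
    + apply in_map_iff in Hu; destruct Hu as [v [<- Hv]]; simpl; rewrite (IH m); auto.
    + apply in_app_iff in Hu; destruct Hu as [Hu|Hu].
      * apply in_map_iff in Hu; destruct Hu as [v [<- Hv]]; simpl; rewrite (IH m); auto.
      * destruct m as [|m]; [destruct Hu|].
        apply in_map_iff in Hu; destruct Hu as [v [<- Hv]]; simpl; rewrite (IH m); auto.
Qed.

Definition sumw (m : nat) (f : list step -> nat) : nat := lsum f (words m).

Lemma sumw_S m f : sumw (S m) f =
  (sumw m (fun u => f (U :: u)) + sumw m (fun u => f (Defs.D :: u)) +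
   match m with O => O | S m' => sumw m' (fun u => f (H :: u)) end)%nat.
Proof.
  unfold sumw. change (words (S m)) with (map (cons U) (words m) ++ map (cons Defs.D) (words m) ++
            match m with O => [] | S m'' => map (cons H) (words m'') end).
  rewrite !lsum_app, !lsum_map.
  destruct m; [simpl; lia|]. rewrite lsum_map. lia.
Qed.

Lemma sumw_0 f : sumw 0 f = f [].
Proof. unfold sumw; simpl; lia. Qed.

Lemma sumw_ext_in m f g : (forall u, wlen u = m -> f u = g u) -> sumw m f = sumw m g.
Proof. intros Hf; apply lsum_ext_in; intros u Hu; apply Hf, words_wlen; auto. Qed.

Lemma sumw_ext m f g : (forall u, f u = g u) -> sumw m f = sumw m g.
Proof. intros Hf; apply sumw_ext_in; auto. Qed.

Lemma sumw_zero m f : (forall u, f u = O) -> sumw m f = O.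
Proof.
  intros Hf; unfold sumw; induction (words m); simpl; auto. rewrite Hf, IHl; auto.
Qed.

Definition count (P : list step -> bool) (m : nat) : nat :=
  sumw m (fun u => if P u then 1%nat else 0%nat).

Lemma count_eq P m : length (filter P (words m)) = count P m.
Proof.
  unfold count, sumw. induction (words m); simpl; auto.
  destruct (P a); simpl; auto.
Qed.

Lemma count_S P m : count P (S m) =
  (count (fun u => P (U :: u)) m + count (fun u => P (Defs.D :: u)) m +
   match m with O => O | S m' => count (fun u => P (H :: u)) m' end)%nat.
Proof. unfold count; rewrite sumw_S; reflexivity. Qed.

Lemma count_0 P : count P 0 = if P [] then 1%nat else 0%nat.
Proof. unfold count; rewrite sumw_0; reflexivity. Qed.

Lemma count_ext_in P Q m : (forall u, wlen u = m -> P u = Q u) -> count P m = count Q m.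
Proof. intros HP; apply sumw_ext_in; intros u Hu; rewrite HP; auto. Qed.

Lemma count_ext P Q m : (forall u, P u = Q u) -> count P m = count Q m.
Proof. intros HP; apply count_ext_in; auto. Qed.

Lemma count_false P m : (forall u, P u = false) -> count P m = O.
Proof. intros HP; apply sumw_zero; intros u; rewrite HP; auto. Qed.

Lemma hv_big : forall w n x, (n < x)%nat -> has_vertex_at n x w = false.
Proof.
  induction w; intros n x Hx; simpl.
  - rewrite orb_false_r. apply Nat.eqb_neq; lia.
  - rewrite IHw by lia. rewrite orb_false_r. apply Nat.eqb_neq; lia.
Qed.

Lemma hv_shift : forall w n x, has_vertex_at (n + x) x w = has_vertex_at n 0 w.
Proof.
  induction w as [|s w IH]; intros n x; simpl.
  - rewrite !orb_false_r. destruct n; simpl; [apply Nat.eqb_refl| apply Nat.eqb_neq; lia].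
  - f_equal.
    + destruct n; simpl; [apply Nat.eqb_refl| apply Nat.eqb_neq; lia].
    + destruct (le_lt_dec (width s) n) as [Hle|Hlt].
      * replace n with ((n - width s) + width s)%nat at 2 by lia.
        rewrite IH. replace (n + x)%nat with ((n - width s) + (x + width s))%nat by lia.
        rewrite IH; auto.
      * rewrite !hv_big by lia; auto.
Qed.

Lemma split_vertex : forall a b (P : list step -> bool),
  count (fun w => has_vertex_at a 0 w && P w) (a + b) =
  sumw a (fun u => count (fun v => P (u ++ v)) b).
Proof.
  induction a as [a IH] using lt_wf_ind; intros b P.
  destruct a as [|a].
  - rewrite sumw_0. apply count_ext; intros u; destruct u; reflexivity.
  - simpl (S a + b)%nat. rewrite count_S, sumw_S.
    f_equal; [f_equal|].
    + transitivity (count (fun w => has_vertex_at a 0 w && P (U :: w)) (a+b));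
        [|apply (IH a ltac:(lia) b (fun w => P (U :: w)))].
      apply count_ext; intros u.
      change (has_vertex_at (S a) 0 (U :: u)) with ((0 =? S a)%nat || has_vertex_at (S a) 1 u).
      replace (has_vertex_at (S a) 1 u) with (has_vertex_at a 0 u) by (rewrite <- (hv_shift u a 1); f_equal; lia). reflexivity.
    + transitivity (count (fun w => has_vertex_at a 0 w && P (Defs.D :: w)) (a+b));
        [|apply (IH a ltac:(lia) b (fun w => P (Defs.D :: w)))].
      apply count_ext; intros u.
      change (has_vertex_at (S a) 0 (Defs.D :: u)) with ((0 =? S a)%nat || has_vertex_at (S a) 1 u).
      replace (has_vertex_at (S a) 1 u) with (has_vertex_at a 0 u) by (rewrite <- (hv_shift u a 1); f_equal; lia). reflexivity.
    + destruct a as [|a].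
      * destruct b as [|b]; simpl; auto. apply count_false; intros u.
        change (has_vertex_at 1 0 (H :: u)) with ((0 =? 1)%nat || has_vertex_at 1 2 u).
        rewrite hv_big by lia; reflexivity.
      * simpl (S a + b)%nat.
        transitivity (count (fun w => has_vertex_at a 0 w && P (H :: w)) (a+b));
          [|apply (IH a ltac:(lia) b (fun w => P (H :: w)))].
        apply count_ext; intros u.
        change (has_vertex_at (S (S a)) 0 (H :: u)) with ((0 =? S (S a))%nat || has_vertex_at (S (S a)) 2 u).
        replace (has_vertex_at (S (S a)) 2 u) with (has_vertex_at a 0 u) by (rewrite <- (hv_shift u a 2); f_equal; lia). reflexivity.
Qed.

Lemma step_eqb_spec a b : step_eqb a b = true <-> a = b.
Proof. destruct a, b; simpl; split; intros; congruence. Qed.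

Lemma lseq_spec : forall p q, list_step_eqb p q = true <-> p = q.
Proof.
  induction p as [|a p IH]; intros [|b q]; simpl; split; intros Hq; try congruence; auto.
  - apply andb_prop in Hq; destruct Hq as [H1 H2].
    apply step_eqb_spec in H1; apply IH in H2; subst; auto.
  - injection Hq as <- <-. apply andb_true_intro; split; [apply step_eqb_spec|apply IH]; auto.
Qed.

Lemma count_single : forall w m (Q : list step -> bool),
  count (fun v => list_step_eqb v w && Q v) m =
  if (wlen w =? m)%nat && Q w then 1%nat else 0%nat.
Proof.
  induction w as [|s w IH]; intros m Q.
  - destruct m as [|m].
    + rewrite count_0. reflexivity.
    + rewrite count_S.
      rewrite (count_false (fun u => list_step_eqb (U :: u) [] && Q (U :: u))) by (intros; reflexivity).
      rewrite (count_false (fun u => list_step_eqb (Defs.D :: u) [] && Q (Defs.D :: u))) by (intros; reflexivity).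
      destruct m; [reflexivity|]. rewrite count_false by (intros; reflexivity). reflexivity.
  - destruct m as [|m].
    + rewrite count_0. simpl. destruct s; reflexivity.
    + rewrite count_S. destruct s.
      * rewrite (count_false (fun u => list_step_eqb (Defs.D :: u) (U :: w) && Q (Defs.D :: u)))
          by (intros; reflexivity).
        rewrite (count_ext _ (fun v => list_step_eqb v w && Q (U :: v)) m) by (intros; reflexivity). rewrite (IH m (fun u => Q (U :: u))).
        destruct m; [simpl; destruct (wlen w =? 0)%nat; simpl; destruct (Q (U::w)); reflexivity|].
        rewrite count_false by (intros; reflexivity). simpl.
        destruct (wlen w =? S m)%nat; simpl; destruct (Q (U::w)); reflexivity.
      * rewrite (count_false (fun u => list_step_eqb (U :: u) (Defs.D :: w) && Q (U :: u)))
          by (intros; reflexivity).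
        rewrite (count_ext _ (fun v => list_step_eqb v w && Q (Defs.D :: v)) m) by (intros; reflexivity). rewrite (IH m (fun u => Q (Defs.D :: u))).
        destruct m; [simpl; destruct (wlen w =? 0)%nat; simpl; destruct (Q (Defs.D::w)); reflexivity|].
        rewrite count_false by (intros; reflexivity). simpl.
        destruct (wlen w =? S m)%nat; simpl; destruct (Q (Defs.D::w)); reflexivity.
      * rewrite !count_false by (intros; reflexivity).
        destruct m as [|m]; [simpl; destruct (wlen w); reflexivity|].
        rewrite (count_ext _ (fun v => list_step_eqb v w && Q (H :: v)) m) by (intros; reflexivity). rewrite (IH m (fun u => Q (H :: u))). simpl.
        reflexivity.
Qed.

Lemma wlen_app u v : wlen (u ++ v) = (wlen u + wlen v)%nat.
Proof. induction u; simpl; lia. Qed.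

Lemma reflect_cons s u : Defs.reflect (s :: u) = Defs.reflect u ++ [flip s].
Proof. reflexivity. Qed.

Lemma wlen_reflect u : wlen (Defs.reflect u) = wlen u.
Proof.
  induction u as [|s u IH]; [reflexivity|].
  rewrite reflect_cons, wlen_app, IH. simpl. destruct s; simpl; lia.
Qed.

Lemma reflect_app u v : Defs.reflect (u ++ v) = Defs.reflect v ++ Defs.reflect u.
Proof. unfold Defs.reflect. rewrite map_app, rev_app_distr. reflexivity. Qed.

Lemma reflect_invol u : Defs.reflect (Defs.reflect u) = u.
Proof.
  unfold Defs.reflect. rewrite map_rev, rev_involutive, map_map.
  induction u as [|s u IH]; simpl; [reflexivity|]. rewrite IH; destruct s; reflexivity.
Qed.

Lemma app_width_inj : forall a c b d, wlen a = wlen c -> a ++ b = c ++ d -> a = c /\ b = d.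
Proof.
  induction a as [|s a IH]; intros c b d Hw He.
  - destruct c as [|t c]; [auto|]. simpl in Hw. destruct t; simpl in Hw; lia.
  - destruct c as [|t c]; [simpl in Hw; destruct s; simpl in Hw; lia|].
    simpl in He. injection He as <- He.
    simpl in Hw. destruct (IH c b d ltac:(lia) He) as [-> ->]. auto.
Qed.

Lemma sym_key u v : wlen u = wlen v ->
  list_step_eqb (Defs.reflect (u ++ v)) (u ++ v) = list_step_eqb v (Defs.reflect u).
Proof.
  intros Hw. apply eq_true_iff_eq. rewrite !lseq_spec. split; intros He.
  - rewrite reflect_app in He. apply app_width_inj in He.
    + destruct He as [_ He]; auto.
    + rewrite wlen_reflect; auto.
  - subst v. rewrite reflect_app, reflect_invol. reflexivity.
Qed.

Definition stp (h : nat) (s : step) : option nat :=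
  match s with U => Some (S h) | Defs.D => match h with O => None | S h' => Some h' end | H => Some h end.
Fixpoint walk (h : nat) (p : list step) : option nat :=
  match p with [] => Some h | s :: q => match stp h s with None => None | Some h' => walk h' q end end.

Lemma nonneg_walk : forall p h, nonneg_ends0 h p = match walk h p with Some O => true | _ => false end.
Proof.
  induction p as [|s p IH]; intros h; simpl.
  - destruct h; reflexivity.
  - destruct s; simpl; auto. destruct h; auto.
Qed.

Lemma walk_app : forall u v h, walk h (u ++ v) = match walk h u with None => None | Some h' => walk h' v end.
Proof.
  induction u as [|s u IH]; intros v h; simpl; auto.
  destruct (stp h s); auto.
Qed.

Lemma walk_reflect : forall u h h', walk h u = Some h' -> walk h' (Defs.reflect u) = Some h.
Proof.
  induction u as [|s u IH]; intros h h' Hw; simpl in Hw.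
  - injection Hw as <-. reflexivity.
  - rewrite reflect_cons, walk_app.
    destruct (stp h s) as [h1|] eqn:E; [|discriminate].
    rewrite (IH h1 h' Hw). destruct s; simpl in E |- *.
    + injection E as <-; reflexivity.
    + destruct h; [discriminate|]. injection E as <-; reflexivity.
    + injection E as <-; reflexivity.
Qed.

Definition okw h u : bool := match walk h u with Some _ => true | None => false end.
Definition noHb (p : list step) : bool := forallb (fun s => negb (step_eqb s H)) p.

Lemma nonneg_sym u : nonneg_ends0 0 (u ++ Defs.reflect u) = okw 0 u.
Proof.
  rewrite nonneg_walk, walk_app. unfold okw.
  destruct (walk 0 u) eqn:E; auto. rewrite (walk_reflect _ _ _ E). reflexivity.
Qed.

Lemma noH_reflect : forall u, noHb (Defs.reflect u) = noHb u.
Proof.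
  induction u as [|s u IH]; [reflexivity|].
  rewrite reflect_cons. unfold noHb in *. rewrite forallb_app, IH. simpl.
  destruct s; simpl; rewrite ?andb_true_r, ?andb_false_r; reflexivity.
Qed.

Definition Dc n h := count (fun u => okw h u && noHb u) n.
Definition Sc n h := count (fun u => okw h u) n.

Lemma dsym_Dc n : dsym n = Dc n 0.
Proof.
  unfold dsym. rewrite count_eq. replace (2 * n)%nat with (n + n)%nat by lia.
  rewrite (count_ext _ (fun p => has_vertex_at n 0 p &&
      (dyckb p && list_step_eqb (Defs.reflect p) p))).
  2:{ intros p; unfold symmetricb. destruct (dyckb p), (has_vertex_at n 0 p); reflexivity. }
  rewrite split_vertex. transitivity (sumw n (fun u => if okw 0 u && noHb u then 1%nat else 0%nat)); [|reflexivity]. apply sumw_ext_in; intros u Hu.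
  rewrite (count_ext_in _ (fun v => list_step_eqb v (Defs.reflect u) && dyckb (u ++ Defs.reflect u))).
  2:{ intros v Hv. rewrite sym_key by lia.
      destruct (list_step_eqb v (Defs.reflect u)) eqn:E; [|rewrite andb_false_r; reflexivity].
      apply lseq_spec in E; subst v. rewrite andb_true_r; reflexivity. }
  rewrite count_single. rewrite wlen_reflect, Hu, Nat.eqb_refl. simpl.
  unfold dyckb. rewrite nonneg_sym. fold (noHb (u ++ Defs.reflect u)).
  unfold noHb in *. rewrite forallb_app. fold (noHb (Defs.reflect u)). rewrite noH_reflect.
  unfold noHb. rewrite andb_diag. reflexivity.
Qed.

Lemma ssym_Sc n : ssym n = Sc n 0.
Proof.
  unfold ssym. rewrite count_eq. replace (2 * n)%nat with (n + n)%nat by lia.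
  rewrite (count_ext _ (fun p => has_vertex_at n 0 p &&
      (schroederb p && list_step_eqb (Defs.reflect p) p))).
  2:{ intros p; unfold symmetricb. destruct (schroederb p), (has_vertex_at n 0 p); reflexivity. }
  rewrite split_vertex. transitivity (sumw n (fun u => if okw 0 u then 1%nat else 0%nat)); [|reflexivity]. apply sumw_ext_in; intros u Hu.
  rewrite (count_ext_in _ (fun v => list_step_eqb v (Defs.reflect u) && schroederb (u ++ Defs.reflect u))).
  2:{ intros v Hv. rewrite sym_key by lia.
      destruct (list_step_eqb v (Defs.reflect u)) eqn:E; [|rewrite andb_false_r; reflexivity].
      apply lseq_spec in E; subst v. rewrite andb_true_r; reflexivity. }
  rewrite count_single. rewrite wlen_reflect, Hu, Nat.eqb_refl. simpl.
  unfold schroederb. rewrite nonneg_sym. reflexivity.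
Qed.

Lemma Dc_0 h : Dc 0 h = 1%nat.
Proof. reflexivity. Qed.
Lemma Sc_0 h : Sc 0 h = 1%nat.
Proof. reflexivity. Qed.

Lemma Dc_S m h : Dc (S m) h = (Dc m (S h) + match h with O => O | S h' => Dc m h' end)%nat.
Proof.
  unfold Dc. rewrite count_S.
  replace (match m with O => O | S m' => count (fun u => okw h (H :: u) && noHb (H :: u)) m' end) with O.
  2:{ destruct m; auto. rewrite count_false; auto. intros u; unfold noHb; simpl; apply andb_false_r. }
  rewrite Nat.add_0_r. f_equal.
  destruct h as [|h].
  - apply count_false. intros u; reflexivity.
  - reflexivity.
Qed.

Lemma Sc_S m h : Sc (S m) h = (Sc m (S h) + match h with O => O | S h' => Sc m h' end +
   match m with O => O | S m' => Sc m' h end)%nat.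
Proof.
  unfold Sc. rewrite count_S. f_equal. f_equal.
  destruct h as [|h].
  - apply count_false. intros u; reflexivity.
  - reflexivity.
Qed.

Definition val (k i : nat) : R :=
  INR (k + 1) / INR (k + 2 * i + 1) * Binomial.C (k + 2 * i + 1) i.

Lemma classify n k : (exists i, n = (k + 2 * i)%nat) \/ (forall i, n <> (k + 2 * i)%nat).
Proof.
  destruct (k <=? n)%nat eqn:E1.
  - apply Nat.leb_le in E1.
    destruct (Nat.even (n - k)) eqn:E2.
    + left. apply Nat.even_spec in E2. destruct E2 as [i Hi]. exists i; lia.
    + right. intros i Hi. subst n. replace (k + 2 * i - k)%nat with (2 * i)%nat in E2 by lia.
      rewrite Nat.even_mul in E2. simpl in E2. discriminate.
  - right. intros i Hi. apply Nat.leb_gt in E1. lia.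
Qed.

Lemma dnk_val n k i : n = (k + 2 * i)%nat -> dnk n k = val k i.
Proof.
  intros ->. unfold dnk, val.
  replace (k <=? k + 2 * i)%nat with true by (symmetry; apply Nat.leb_le; lia).
  replace (k + 2 * i - k)%nat with (i * 2)%nat by lia.
  rewrite Nat.even_mul. rewrite orb_true_r. simpl andb. cbv iota.
  rewrite Nat.div_mul by lia. reflexivity.
Qed.

Lemma dnk_zero n k : (forall i, n <> (k + 2 * i)%nat) -> dnk n k = 0.
Proof.
  intros Hn. unfold dnk.
  destruct (k <=? n)%nat eqn:E1; [|reflexivity].
  destruct (Nat.even (n - k)) eqn:E2; [|reflexivity].
  exfalso. apply Nat.leb_le in E1. apply Nat.even_spec in E2. destruct E2 as [i Hi].
  apply (Hn i); lia.
Qed.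

Lemma factS n : fact (S n) = (S n * fact n)%nat.
Proof. reflexivity. Qed.

Lemma val_eq k i : val k i = INR (k + 1) * INR (fact (k + 2 * i)) /
   (INR (fact i) * INR (fact (k + i + 1))).
Proof.
  unfold val, Binomial.C.
  replace (k + 2 * i + 1 - i)%nat with (k + i + 1)%nat by lia.
  replace (k + 2 * i + 1)%nat with (S (k + 2 * i)) by lia.
  rewrite factS, mult_INR.
  assert (H1 := INR_fact_neq_0 (k + 2 * i)).
  assert (H2 := INR_fact_neq_0 i).
  assert (H3 := INR_fact_neq_0 (k + i + 1)).
  assert (H4 : INR (S (k + 2 * i)) <> 0) by (apply not_0_INR; lia).
  field. repeat split; auto.
Qed.

Lemma val_0 k : val k 0 = 1.
Proof.
  unfold val. replace (k + 2 * 0 + 1)%nat with (k + 1)%nat by lia.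
  unfold Binomial.C. rewrite Nat.sub_0_r. simpl (fact 0). simpl (INR 1).
  assert (H1 := INR_fact_neq_0 (k + 1)).
  assert (H4 : INR (k + 1) <> 0) by (apply not_0_INR; lia).
  field. auto.
Qed.

Lemma val_rec0 i : val 0 (S i) = val 1 i.
Proof.
  rewrite !val_eq.
  replace (0 + 2 * S i)%nat with (S (S (2 * i))) by lia.
  replace (1 + 2 * i)%nat with (S (2 * i)) by lia.
  replace (0 + S i + 1)%nat with (S (S i)) by lia.
  replace (1 + i + 1)%nat with (S (S i)) by lia.
  rewrite (factS (S (2 * i))), (factS i), !mult_INR.
  assert (H1 := INR_fact_neq_0 (S (2 * i))).
  assert (H2 := INR_fact_neq_0 i).
  assert (H3 := INR_fact_neq_0 (S (S i))).
  repeat rewrite ?S_INR, ?plus_INR, ?mult_INR. simpl (INR 0). simpl (INR 1).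
  assert (0 <= INR i) by apply pos_INR.
  field. repeat split; auto; lra.
Qed.

Lemma val_rec k i : val (S k) (S i) = val k (S i) + val (S (S k)) i.
Proof.
  rewrite !val_eq.
  replace (S k + 2 * S i)%nat with (S (k + 2 * i + 2)) by lia.
  replace (k + 2 * S i)%nat with (k + 2 * i + 2)%nat by lia.
  replace (S (S k) + 2 * i)%nat with (k + 2 * i + 2)%nat by lia.
  replace (S k + S i + 1)%nat with (S (k + i + 2)) by lia.
  replace (k + S i + 1)%nat with (k + i + 2)%nat by lia.
  replace (S (S k) + i + 1)%nat with (S (k + i + 2)) by lia.
  rewrite (factS (k + 2 * i + 2)), (factS i), (factS (k + i + 2)), !mult_INR.
  assert (H1 := INR_fact_neq_0 (k + 2 * i + 2)).
  assert (H2 := INR_fact_neq_0 i).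
  assert (H3 := INR_fact_neq_0 (k + i + 2)).
  repeat rewrite ?S_INR, ?plus_INR, ?mult_INR. simpl (INR 0). simpl (INR 1).
  assert (0 <= INR i) by apply pos_INR.
  assert (0 <= INR k) by apply pos_INR.
  field. repeat split; auto; lra.
Qed.

Lemma dnk_rec n k : dnk (S n) k = match k with O => 0 | S k' => dnk n k' end + dnk n (S k).
Proof.
  destruct (classify (S n) k) as [[i Hi]|Hno].
  - destruct i as [|i].
    + assert (k = S n) by lia. subst k.
      rewrite (dnk_val (S n) (S n) 0) by lia. rewrite (dnk_val n n 0) by lia.
      rewrite (dnk_zero n (S (S n))) by (intros j; lia). rewrite !val_0. ring.
    + destruct k as [|k].
      * rewrite (dnk_val (S n) 0 (S i)) by lia. rewrite (dnk_val n 1 i) by lia.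
        rewrite val_rec0. ring.
      * rewrite (dnk_val (S n) (S k) (S i)) by lia. rewrite (dnk_val n k (S i)) by lia.
        rewrite (dnk_val n (S (S k)) i) by lia. apply val_rec.
  - rewrite (dnk_zero (S n) k Hno).
    rewrite (dnk_zero n (S k)) by (intros j Hj; apply (Hno (S j)); lia).
    destruct k as [|k]; [ring|].
    rewrite (dnk_zero n k) by (intros j Hj; apply (Hno j); lia). ring.
Qed.

Definition bb (n k : nat) : R := (-1) ^ ((n - k) / 2) * dnk n k.

Lemma bb_val n k i : n = (k + 2 * i)%nat -> bb n k = (-1) ^ i * val k i.
Proof.
  intros Hn. unfold bb. rewrite (dnk_val n k i Hn). f_equal. f_equal.
  subst n. replace (k + 2 * i - k)%nat with (i * 2)%nat by lia.
  apply Nat.div_mul; lia.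
Qed.

Lemma bb_zero n k : (forall i, n <> (k + 2 * i)%nat) -> bb n k = 0.
Proof. intros Hn. unfold bb. rewrite (dnk_zero n k Hn). ring. Qed.

Lemma bb_rec n k : bb (S n) k = match k with O => 0 | S k' => bb n k' end - bb n (S k).
Proof.
  destruct (classify (S n) k) as [[i Hi]|Hno].
  - destruct i as [|i].
    + assert (k = S n) by lia. subst k.
      rewrite (bb_val (S n) (S n) 0) by lia. rewrite (bb_val n n 0) by lia.
      rewrite (bb_zero n (S (S n))) by (intros j; lia). rewrite !val_0. ring.
    + destruct k as [|k].
      * rewrite (bb_val (S n) 0 (S i)) by lia. rewrite (bb_val n 1 i) by lia.
        rewrite val_rec0. simpl pow. ring.
      * rewrite (bb_val (S n) (S k) (S i)) by lia. rewrite (bb_val n k (S i)) by lia.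
        rewrite (bb_val n (S (S k)) i) by lia. rewrite val_rec. simpl pow. ring.
  - rewrite (bb_zero (S n) k Hno).
    rewrite (bb_zero n (S k)) by (intros j Hj; apply (Hno (S j)); lia).
    destruct k as [|k]; [ring|].
    rewrite (bb_zero n k) by (intros j Hj; apply (Hno j); lia). ring.
Qed.

Lemma bb_big n k : (n < k)%nat -> bb n k = 0.
Proof. intros Hk. apply bb_zero. intros i; lia. Qed.

Lemma bb_0 k : bb 0 k = match k with O => 1 | S _ => 0 end.
Proof.
  destruct k. rewrite (bb_val 0 0 0) by lia. rewrite val_0. ring.
  apply bb_big; lia.
Qed.

Lemma sum_S (g : nat -> R) N : sum_f_R0 g (S N) = sum_f_R0 g N + g (S N).
Proof. reflexivity. Qed.

Lemma sum_shift (g : nat -> R) N : sum_f_R0 g (S N) = g O + sum_f_R0 (fun k => g (S k)) N.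
Proof.
  induction N; simpl; [ring|]. simpl in IHN. rewrite IHN. ring.
Qed.

Lemma sum_first (g : nat -> R) N : (forall k, g (S k) = 0) -> sum_f_R0 g N = g O.
Proof. intros Hg; induction N; simpl; auto. rewrite IHN, Hg; ring. Qed.

Lemma main_sum : forall n h N, (n <= N)%nat ->
  sum_f_R0 (fun k => bb n k * INR (Sc k h)) N = INR (Dc n h).
Proof.
  induction n as [|n IH]; intros h N HN.
  - rewrite sum_first.
    + rewrite bb_0, Sc_0, Dc_0. simpl; ring.
    + intros k; rewrite bb_0; ring.
  - destruct N as [|N]; [lia|].
    rewrite (sum_eq _ (fun k => match k with O => 0 | S k' => bb n k' end * INR (Sc k h)
                               - bb n (S k) * INR (Sc k h))).
    2:{ intros k _. rewrite bb_rec. ring. }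
    rewrite minus_sum. rewrite sum_shift. simpl (match O with O => 0 | S k' => _ end).
    replace (sum_f_R0 (fun k => bb n (S k) * INR (Sc k h)) (S N)) with
      (sum_f_R0 (fun k => bb n k * INR (match k with O => O | S k' => Sc k' h end)) N).
    2:{ transitivity (sum_f_R0 (fun k => bb n k * INR (match k with O => O | S k' => Sc k' h end)) (S N)).
        - rewrite sum_S, (bb_big n (S N)) by lia. ring.
        - rewrite sum_shift. simpl (INR 0). rewrite Rmult_0_r, Rplus_0_l.
          rewrite (sum_S (fun k => bb n (S k) * INR (Sc k h)) N).
          rewrite (bb_big n (S (S N))) by lia. rewrite Rmult_0_l, Rplus_0_r. reflexivity. }
    rewrite Rmult_0_l, Rplus_0_l, <- minus_sum.
    rewrite (sum_eq _ (fun k => bb n k * INR (Sc k (S h)) +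
       bb n k * INR (match h with O => O | S h' => Sc k h' end))).
    2:{ intros k _. rewrite Sc_S. rewrite !plus_INR.
        destruct k; simpl (INR 0); ring. }
    rewrite plus_sum, IH by lia. rewrite Dc_S, plus_INR. f_equal.
    destruct h as [|h].
    + rewrite sum_first; [simpl; ring|]. intros; simpl; ring.
    + apply IH; lia.
Qed.

Theorem part1 n : INR (dsym n) =
      sum_f_R0 (fun k => (-1) ^ ((n - k) / 2) * dnk n k * INR (ssym k)) n.
Proof.
  rewrite dsym_Dc. rewrite <- (main_sum n 0 n) by lia.
  apply sum_eq. intros k _. rewrite ssym_Sc. reflexivity.
Qed.

Lemma dnk_0 k : dnk 0 k = match k with O => 1 | S _ => 0 end.
Proof.
  destruct k. rewrite (dnk_val 0 0 0) by lia. apply val_0.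
  apply dnk_zero; intros i; lia.
Qed.

Lemma dnk_bounds : forall n k, 0 <= dnk n k <= 2 ^ n.
Proof.
  induction n as [|n IH]; intros k.
  - rewrite dnk_0. destruct k; simpl; lra.
  - rewrite dnk_rec. destruct (IH (S k)) as [A B].
    destruct k as [|k].
    + simpl; lra.
    + destruct (IH k); simpl; lra.
Qed.

Definition aa (x : R) (k n : nat) : R := dnk n k * x ^ n.

Lemma aa_bound x k n : Rabs (aa x k n) <= (2 * Rabs x) ^ n.
Proof.
  unfold aa. rewrite Rabs_mult, <- RPow_abs, Rpow_mult_distr.
  destruct (dnk_bounds n k). rewrite Rabs_pos_eq by auto.
  apply Rmult_le_compat_r; auto. apply pow_le, Rabs_pos.
Qed.

Lemma aa_ex x k : Rabs x < / 2 -> ex_series (fun n => Rabs (aa x k n)).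
Proof.
  intros Hx. apply (@ex_series_le R_AbsRing R_CompleteNormedModule _ (fun n => (2 * Rabs x) ^ n)).
  - intros n. change (norm (Rabs (aa x k n))) with (Rabs (Rabs (aa x k n))).
    rewrite Rabs_Rabsolu. apply aa_bound.
  - apply ex_series_geom. rewrite Rabs_pos_eq; [lra|]. assert (0 <= Rabs x) by apply Rabs_pos. lra.
Qed.

Definition FF x k := Series (aa x k).

Lemma FF_bound x k : Rabs x < / 2 -> Rabs (FF x k) <= / (1 - 2 * Rabs x).
Proof.
  intros Hx. assert (0 <= Rabs x) by apply Rabs_pos.
  unfold FF. eapply Rle_trans; [apply Series_Rabs, aa_ex; auto|].
  rewrite <- Series_geom by (rewrite Rabs_pos_eq; lra).
  apply Series_le.
  - intros n; split; [apply Rabs_pos|apply aa_bound].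
  - apply ex_series_geom; rewrite Rabs_pos_eq; lra.
Qed.

Lemma FF_rec x k : Rabs x < / 2 ->
  FF x k = match k with O => 1 | S _ => 0 end +
           x * match k with O => 0 | S k' => FF x k' end + x * FF x (S k).
Proof.
  intros Hx.
  assert (Hex : forall j, ex_series (aa x j)) by (intros j; apply ex_series_Rabs, aa_ex; auto).
  unfold FF at 1. rewrite Series_incr_1 by auto.
  unfold aa at 1. rewrite dnk_0. simpl pow. rewrite Rmult_1_r.
  destruct k as [|k].
  - rewrite (Series_ext _ (fun n => x * aa x 1 n)).
    2:{ intros n. unfold aa. rewrite dnk_rec. simpl. ring. }
    rewrite Series_scal_l. unfold FF. ring.
  - rewrite (Series_ext _ (fun n => x * (aa x k n + aa x (S (S k)) n))).
    2:{ intros n. unfold aa. rewrite dnk_rec. simpl. ring. }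
    rewrite Series_scal_l, Series_plus by auto. unfold FF. ring.
Qed.

Lemma Ccat_props x : Rabs x < / 2 ->
  let c := Ccat (x ^ 2) in c = 1 + x ^ 2 * c ^ 2 /\ 0 < c <= 2.
Proof.
  intros Hx c. unfold c, Ccat.
  destruct (Req_EM_T (x ^ 2) 0) as [E|E].
  - rewrite E. split; lra.
  - assert (Ht : 0 < x ^ 2) by (assert (0 <= x^2) by (simpl; nra); lra).
    assert (Ht2 : x ^ 2 < / 4).
    { assert (Rabs x * Rabs x < /2 * /2).
      { assert (0 <= Rabs x) by apply Rabs_pos. nra. }
      rewrite <- Rabs_mult in H. simpl. rewrite Rmult_1_r.
      rewrite Rabs_pos_eq in H by nra. lra. }
    set (t := x ^ 2) in *.
    assert (Hs0 : 0 <= 1 - 4 * t) by lra.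
    set (s := sqrt (1 - 4 * t)).
    assert (Hss : s * s = 1 - 4 * t) by (apply sqrt_sqrt; auto).
    assert (Hsp : 0 <= s) by apply sqrt_pos.
    assert (Hc : (1 - s) / (2 * t) = 2 / (1 + s)).
    { field_simplify_eq; [nra|lra]. }
    rewrite Hc. split.
    + field_simplify_eq; [nra|lra].
    + split. apply Rdiv_lt_0_compat; lra.
      apply Rmult_le_reg_r with (1 + s); [lra|]. unfold Rdiv. rewrite Rmult_assoc, Rinv_l by lra. nra.
Qed.

Definition GG x k := x ^ k * (Ccat (x ^ 2)) ^ (k + 1).

Lemma GG_S x k : GG x (S k) = x * Ccat (x ^ 2) * GG x k.
Proof. unfold GG. simpl. ring. Qed.

Lemma GG_rec x k : Rabs x < / 2 ->
  GG x k = match k with O => 1 | S _ => 0 end +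
           x * match k with O => 0 | S k' => GG x k' end + x * GG x (S k).
Proof.
  intros Hx. destruct (Ccat_props x Hx) as [Hc _].
  set (c := Ccat (x ^ 2)) in *.
  assert (G0 : GG x 0 = c) by (unfold GG; fold c; rewrite pow_O, Nat.add_0_l, pow_1; ring).
  destruct k as [|k].
  - rewrite GG_S; fold c; rewrite G0. rewrite Hc at 1. ring.
  - rewrite !GG_S; fold c. rewrite Hc at 1. ring.
Qed.

Lemma GG_bound x k : Rabs x < / 2 -> Rabs (GG x k) <= 2.
Proof.
  intros Hx. destruct (Ccat_props x Hx) as [_ [Hc1 Hc2]].
  set (c := Ccat (x ^ 2)) in *.
  assert (Hr : Rabs (x * c) <= 1).
  { rewrite Rabs_mult, (Rabs_pos_eq c) by lra. assert (0 <= Rabs x) by apply Rabs_pos. nra. }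
  induction k as [|k IH].
  - unfold GG; fold c; rewrite pow_O, Nat.add_0_l, pow_1, Rmult_1_l, Rabs_pos_eq; lra.
  - rewrite GG_S. fold c. rewrite Rabs_mult.
    assert (0 <= Rabs (GG x k)) by apply Rabs_pos.
    assert (0 <= Rabs (x * c)) by apply Rabs_pos. nra.
Qed.

Theorem part2 k x : Rabs x < / 2 ->
  is_series (fun n : nat => dnk n k * x ^ n) (x ^ k * (Ccat (x ^ 2)) ^ (k + 1)).
Proof.
  intros Hx.
  destruct (Ccat_props x Hx) as [Hc [Hc1 Hc2]].
  set (c := Ccat (x ^ 2)) in *.
  assert (Hax : 0 <= Rabs x) by apply Rabs_pos.
  set (E := fun j => FF x j - GG x j).
  set (M := / (1 - 2 * Rabs x) + 2).
  assert (HM : 0 < M) by (unfold M; assert (0 < / (1 - 2 * Rabs x)) by (apply Rinv_0_lt_compat; lra); lra).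
  assert (HEb : forall j, Rabs (E j) <= M).
  { intros j. unfold E, M. eapply Rle_trans; [apply Rabs_triang|]. rewrite Rabs_Ropp.
    assert (H1 := FF_bound x j Hx). assert (H2 := GG_bound x j Hx). lra. }
  assert (HE0 : E 0%nat = x * E 1%nat).
  { unfold E. rewrite (FF_rec x 0 Hx), (GG_rec x 0 Hx). ring. }
  assert (HES : forall j, E (S j) = x * E j + x * E (S (S j))).
  { intros j. unfold E. rewrite (FF_rec x (S j) Hx), (GG_rec x (S j) Hx). ring. }
  set (r := x * c).
  assert (Hr : Rabs r < 1).
  { unfold r. rewrite Rabs_mult, (Rabs_pos_eq c) by lra. nra. }
  set (W := fun j => E (S j) - r * E j).
  assert (HW : forall j, r * W (S j) = W j).
  { intros j. unfold W, r.
    assert (H1 : x * E (S (S j)) = E (S j) - x * E j) by (rewrite (HES j); ring).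
    replace (x * c * (E (S (S j)) - x * c * E (S j))) with
      (c * (x * E (S (S j))) - (x ^ 2 * c ^ 2) * E (S j)) by ring.
    rewrite H1. replace (x ^ 2 * c ^ 2) with (c - 1) by lra. ring. }
  assert (HW0 : forall j, W 0%nat = r ^ j * W j).
  { induction j as [|j IH]; [simpl; ring|]. rewrite IH, <- HW. simpl; ring. }
  assert (HWb : forall j, Rabs (W j) <= 2 * M).
  { intros j. unfold W. eapply Rle_trans; [apply Rabs_triang|]. rewrite Rabs_Ropp, Rabs_mult.
    assert (H1 := HEb (S j)). assert (H2 := HEb j).
    assert (0 <= Rabs r) by apply Rabs_pos. assert (0 <= Rabs (E j)) by apply Rabs_pos. nra. }
  assert (W00 : W 0%nat = 0).
  { destruct (Req_dec (W 0%nat) 0) as [|Hne]; auto. exfalso.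
    assert (Hy : 0 < Rabs (W 0%nat) / (2 * M)).
    { apply Rdiv_lt_0_compat; [apply Rabs_pos_lt; auto|lra]. }
    destruct (pow_lt_1_zero r Hr _ Hy) as [N HN].
    specialize (HN N (le_n N)).
    assert (Habs : Rabs (W 0%nat) = Rabs (r ^ N) * Rabs (W N)) by (rewrite (HW0 N) at 1; apply Rabs_mult).
    assert (Hb := HWb N). assert (0 <= Rabs (r ^ N)) by apply Rabs_pos.
    assert (Rabs (r ^ N) * (2 * M) < Rabs (W 0%nat)).
    { apply Rmult_lt_compat_r with (r := 2 * M) in HN; [|lra].
      unfold Rdiv in HN. rewrite Rmult_assoc, Rinv_l in HN by lra. lra. }
    assert (Rabs (r ^ N) * Rabs (W N) <= Rabs (r ^ N) * (2 * M)) by (apply Rmult_le_compat_l; auto).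
    lra. }
  assert (HE1 : E 1%nat = r * E 0%nat) by (unfold W in W00; lra).
  assert (E0 : E 0%nat = 0).
  { rewrite HE1 in HE0. unfold r in HE0.
    assert (Hxc : x ^ 2 * c < 1).
    { assert (x ^ 2 < /4).
      { assert (Rabs x * Rabs x < /2 * /2) by nra.
        rewrite <- Rabs_mult in H. simpl. rewrite Rmult_1_r.
        rewrite Rabs_pos_eq in H by nra. lra. }
      assert (0 <= x ^ 2) by (simpl; nra). nra. }
    assert (E 0%nat * (1 - x ^ 2 * c) = 0) by (replace (E 0%nat * (1 - x ^ 2 * c)) with (E 0%nat - x * (x * c * E 0%nat)) by ring; lra).
    apply Rmult_integral in H. destruct H; auto. lra. }
  assert (Hall : forall j, E j = 0 /\ E (S j) = 0).
  { induction j as [|j [IH1 IH2]].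
    - split; auto. rewrite HE1, E0; ring.
    - split; auto.
      destruct (Req_dec x 0) as [Hx0|Hx0].
      + rewrite (HES (S j)), Hx0; ring.
      + assert (x * E (S (S j)) = 0) by (rewrite (HES j) in IH2; rewrite IH1 in IH2; lra).
        apply Rmult_integral in H. destruct H; [contradiction|auto]. }
  assert (HFG : FF x k = GG x k) by (destruct (Hall k) as [H1 _]; unfold E in H1; lra).
  change (x ^ k * c ^ (k + 1)) with (GG x k). rewrite <- HFG. unfold FF.
  apply (Series_correct (aa x k)). apply ex_series_Rabs, aa_ex; auto.
Qed.

Theorem theorem3p4 :
  (forall n : nat,
      INR (dsym n) =
      sum_f_R0 (fun k => (-1) ^ ((n - k) / 2) * dnk n k * INR (ssym k)) n)
  /\
  (forall (k : nat) (x : R), Rabs x < / 2 ->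
      is_series (fun n : nat => dnk n k * x ^ n) (x ^ k * (Ccat (x ^ 2)) ^ (k + 1))).
Proof. split; [apply part1|intros; apply part2; auto]. Qed.
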